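(* Let $F$, $H$, $X$, $\Omega$, $Q$ and the sequences generated by the IneIREG method be as described in the context, and suppose $H$ is $\mu$-strongly monotone for some $\mu>0$. Let $\varepsilon>0$, let $\mathcal D_0>0$ satisfy $\mathcal D_0\ge\overline\lambda C_HD_X/\underline\lambda$, and suppose $\eta_k\equiv\eta:=\varepsilon/(2\mathcal D_0)$ for all $k\ge0$; $\lambda_k\in[\underline\lambda,\overline\lambda]$ for all $k\ge0$ with $0<\underline\lambda\le\overline\lambda<1/L$, $L:=L_F+\eta L_H$; and $\alpha_0\in[0,1]$ and $\alpha_{k+1}\le(1-\beta_k)\alpha_k$ for all $k\ge0$, where $\beta_k:=\big(\frac{1}{1-\lambda_k^2L^2}+\frac{1}{2\lambda_k\eta\mu}\big)^{-1}$. Define $p_k:=\big(\prod_{i=0}^k(1-\beta_i)\big)^{-1}$ for $k\ge0$, and for $k\ge1$ $\Lambda_k:=\sum_{j=0}^{k-1}\lambda_j\eta p_j$ and $\overline y_k:=\Lambda_k^{-1}\sum_{j=0}^{k-1}\lambda_j\eta p_jy_j$. Let $k\ge1$. If $$k\ge\Big\lceil\Big(\frac{1}{1-\overline\lambda^2L^2}+\frac{\mathcal D_0}{\underline\lambda\mu\varepsilon}\Big)\log\Big(\frac{2(k+1)D_X^2}{\underline\lambda\varepsilon}\Big)\Big\rceil,$$ then $0\le\mathrm{Gap}(\overline y_k,F,X)\le\varepsilon$.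
   Context: Work in $\mathbb{R}^n$ with Euclidean inner product $\langle\cdot,\cdot\rangle$ and norm $\|\cdot\|$; $\log$ is the natural logarithm. The maps $F\colon \mathrm{Dom}\,F\to\mathbb{R}^n$ and $H\colon\mathrm{Dom}\,H\to\mathbb{R}^n$ are monotone and Lipschitz continuous with constants $L_F>0$ and $L_H>0$; $H$ is $\mu$-strongly monotone means $\langle H(x)-H(y),x-y\rangle\ge\mu\|x-y\|^2$ for all $x,y\in\mathrm{Dom}\,H$. $X$ is a nonempty compact convex set and $\Omega$ a nonempty closed convex set with $X\subset\Omega\subset\mathrm{Dom}\,F\cap\mathrm{Dom}\,H$; $P_X,P_\Omega$ denote orthogonal projections. $Q:=\{x\in X:\langle F(x),y-x\rangle\ge0\ \forall y\in X\}$ is assumed nonempty. $D_X:=\sup_{x,y\in X}\|x-y\|$, $C_H:=\sup_{x\in X}\|H(x)\|$. $\mathrm{Gap}(z,F,X):=\sup_{x\in X}\langle F(x),z-x\rangle$. IneIREG method: start with $x_0=x_{-1}\in X$; for $k=0,1,\dots$, with parameters $\alpha_k\ge0$, $\lambda_k>0$, $\eta_k>0$, set $w_k=x_k+\alpha_k(x_k-x_{k-1})$, $w'_k=P_\Omega(w_k)$, $y_k=P_X\big(w_k-\lambda_k(F(w'_k)+\eta_kH(w'_k))\big)$, $x_{k+1}=P_X\big(w_k-\lambda_k(F(y_k)+\eta_kH(y_k))\big)$. *)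

(* Defs.v *)
From mathcomp Require Import all_boot all_order all_algebra.
From mathcomp Require Import all_classical all_reals all_analysis.
Set Implicit Arguments. Unset Strict Implicit. Unset Printing Implicit Defensive.
Import Order.TTheory GRing.Theory Num.Theory.
Import numFieldNormedType.Exports.
Local Open Scope classical_set_scope.
Local Open Scope ring_scope.

Section Defs.
Variables (R : realType) (n : nat).
Local Notation V := 'rV[R]_n.

Definition dotv (u v : V) : R := \sum_(i < n) u ord0 i * v ord0 i.
Definition enorm (u : V) : R := Num.sqrt (dotv u u).

Definition convex (C : set V) : Prop :=
  forall x y (t : R), C x -> C y -> 0 <= t <= 1 -> C (t *: x + (1 - t) *: y).

Definition is_proj (C : set V) (z p : V) : Prop :=
  C p /\ forall y, C y -> enorm (z - p) <= enorm (z - y).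
(* the orthogonal projection P_C (well defined for nonempty closed convex C) *)
Definition orthproj (C : set V) (z : V) : V := xget z (is_proj C z).

Definition monotone_op (D : set V) (F : V -> V) : Prop :=
  forall x y, D x -> D y -> 0 <= dotv (F x - F y) (x - y).
Definition strongly_monotone_op (D : set V) (F : V -> V) (mu : R) : Prop :=
  forall x y, D x -> D y -> mu * enorm (x - y) ^+ 2 <= dotv (F x - F y) (x - y).
Definition lipschitz_op (D : set V) (F : V -> V) (L : R) : Prop :=
  forall x y, D x -> D y -> enorm (F x - F y) <= L * enorm (x - y).

Definition Gap (z : V) (F : V -> V) (X : set V) : R :=
  sup [set dotv (F x) (z - x) | x in X].
Definition diamset (X : set V) : R := sup [set enorm (x - y) | x in X & y in X].
Definition supnorm (X : set V) (H : V -> V) : R := sup [set enorm (H x) | x in X].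

Definition solset (F : V -> V) (X : set V) : set V :=
  [set x | X x /\ forall y, X y -> 0 <= dotv (F x) (y - x)].

(* IneIREG iterates; x (-1) is represented by x 0 via k.-1 *)
Definition ine_w (x : nat -> V) (alpha : nat -> R) (k : nat) : V :=
  x k + alpha k *: (x k - x k.-1).

Definition beta_k (lam : nat -> R) (L eta mu : R) (k : nat) : R :=
  (1 / (1 - lam k ^+ 2 * L ^+ 2) + 1 / (2 * lam k * eta * mu))^-1.
Definition p_k (lam : nat -> R) (L eta mu : R) (k : nat) : R :=
  (\prod_(i < k.+1) (1 - beta_k lam L eta mu i))^-1.
Definition Lambda_k (lam : nat -> R) (L eta mu : R) (k : nat) : R :=
  \sum_(j < k) lam j * eta * p_k lam L eta mu j.
Definition ybar_k (lam : nat -> R) (L eta mu : R) (y : nat -> V) (k : nat) : V :=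
  (Lambda_k lam L eta mu k)^-1 *:
    \sum_(j < k) ((lam j * eta * p_k lam L eta mu j) *: y j).
End Defs.

(* Main.v *)
Require Import Defs.
From mathcomp Require Import all_boot all_order all_algebra.
From mathcomp Require Import all_classical all_reals all_analysis.
From mathcomp Require Import ring lra.
Import Order.TTheory GRing.Theory Num.Theory.
Import numFieldNormedType.Exports.
Local Open Scope classical_set_scope.
Local Open Scope ring_scope.
Set Implicit Arguments. Unset Strict Implicit. Unset Printing Implicit Defensive.
Section Dot.
Variables (R : realType) (n : nat).
Local Notation V := 'rV[R]_n.
Implicit Types u v w : V.

Lemma dotvC u v : dotv u v = dotv v u.
Proof. by rewrite /dotv; apply: eq_bigr => i _; rewrite mulrC. Qed.

Lemma dotvDl u v w : dotv (u + v) w = dotv u w + dotv v w.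
Proof. by rewrite /dotv -big_split; apply: eq_bigr => i _; rewrite mxE mulrDl. Qed.

Lemma dotvZl (a : R) u w : dotv (a *: u) w = a * dotv u w.
Proof. by rewrite /dotv mulr_sumr; apply: eq_bigr => i _; rewrite mxE mulrA. Qed.

Lemma dotvNl u w : dotv (- u) w = - dotv u w.
Proof. by rewrite -scaleN1r dotvZl mulN1r. Qed.

Lemma dotvBl u v w : dotv (u - v) w = dotv u w - dotv v w.
Proof. by rewrite dotvDl dotvNl. Qed.

Lemma dotvDr u v w : dotv w (u + v) = dotv w u + dotv w v.
Proof. by rewrite dotvC dotvDl !(dotvC w). Qed.
Lemma dotvZr (a : R) u w : dotv w (a *: u) = a * dotv w u.
Proof. by rewrite dotvC dotvZl dotvC. Qed.
Lemma dotvNr u w : dotv w (- u) = - dotv w u.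
Proof. by rewrite dotvC dotvNl dotvC. Qed.
Lemma dotvBr u v w : dotv w (u - v) = dotv w u - dotv w v.
Proof. by rewrite dotvDr dotvNr. Qed.

Lemma dotv0r u : dotv u 0 = 0.
Proof. by rewrite /dotv big1 // => i _; rewrite mxE mulr0. Qed.

Lemma dotv_sumr (I : Type) (r : seq I) (P : pred I) (f : I -> V) u :
  dotv u (\sum_(i <- r | P i) f i) = \sum_(i <- r | P i) dotv u (f i).
Proof.
elim: r => [|a r IH]; first by rewrite !big_nil dotv0r.
by rewrite !big_cons; case: (P a); rewrite ?dotvDr IH.
Qed.

Lemma dotvv_ge0 u : 0 <= dotv u u.
Proof. by rewrite /dotv; apply: sumr_ge0 => i _; rewrite -expr2 sqr_ge0. Qed.

Lemma dotvv_eq0 u : dotv u u = 0 -> u = 0.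
Proof.
move=> /eqP; rewrite /dotv psumr_eq0; last by move=> i _; rewrite -expr2 sqr_ge0.
move=> /allP h; apply/rowP => i; rewrite mxE.
have := h i (mem_index_enum i); rewrite -expr2 sqrf_eq0 => /eqP.
by rewrite (ord1 ord0).
Qed.

Lemma enorm_ge0 u : 0 <= enorm u.
Proof. exact: sqrtr_ge0. Qed.

Lemma enorm_sq u : enorm u ^+ 2 = dotv u u.
Proof. by rewrite sqr_sqrtr // dotvv_ge0. Qed.

Lemma young u v (t : R) : 0 < t -> 2 * dotv u v <= t * dotv u u + t^-1 * dotv v v.
Proof.
move=> t0.
have h := dotvv_ge0 (t *: u - v).
rewrite !(dotvBl, dotvBr, dotvZl, dotvZr) (dotvC v u) in h.
have -> : t * dotv u u + t^-1 * dotv v v =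
   t^-1 * (t * (t * dotv u u) - t * dotv u v - (t * dotv u v - dotv v v)) + 2 * dotv u v.
  by field; rewrite gt_eqF.
by rewrite lerDr; apply: mulr_ge0; [rewrite invr_ge0 ltW | lra].
Qed.

Lemma young1 u v : 2 * dotv u v <= dotv u u + dotv v v.
Proof. by have := young u v ltr01; rewrite invr1 !mul1r. Qed.

Lemma cauchy_schwarz u v : dotv u v <= enorm u * enorm v.
Proof.
have [u0|] := eqVneq (dotv u u) 0.
  by rewrite (dotvv_eq0 u0) dotvC dotv0r mulr_ge0 // enorm_ge0.
have [v0|] := eqVneq (dotv v v) 0.
  by rewrite (dotvv_eq0 v0) dotv0r mulr_ge0 // enorm_ge0.
move=> nv nu.
have eu : 0 < enorm u by rewrite sqrtr_gt0 lt_neqAle eq_sym nu dotvv_ge0.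
have ev : 0 < enorm v by rewrite sqrtr_gt0 lt_neqAle eq_sym nv dotvv_ge0.
have := young u v (divr_gt0 ev eu).
rewrite -!enorm_sq invf_div.
have -> : enorm v / enorm u * enorm u ^+ 2 + enorm u / enorm v * enorm v ^+ 2
   = 2 * (enorm u * enorm v) by field; rewrite !gt_eqF.
by rewrite ler_pM2l.
Qed.

Lemma enormD u v : enorm (u + v) <= enorm u + enorm v.
Proof.
have h1 := enorm_ge0 (u + v); have h2 := enorm_ge0 u; have h3 := enorm_ge0 v.
have h : enorm (u + v) ^+ 2 <= (enorm u + enorm v) ^+ 2.
  rewrite enorm_sq !(dotvDl, dotvDr) (dotvC v u) sqrrD -!enorm_sq.
  have := cauchy_schwarz u v; lra.
nra.
Qed.

Lemma enormZ (a : R) u : enorm (a *: u) = `|a| * enorm u.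
Proof.
by rewrite /enorm dotvZl dotvZr mulrA -expr2 sqrtrM ?sqr_ge0 // sqrtr_sqr.
Qed.

Lemma enormN u : enorm (- u) = enorm u.
Proof. by rewrite /enorm dotvNl dotvNr opprK. Qed.

Lemma enormB u v : enorm (u - v) = enorm (v - u).
Proof. by rewrite -enormN opprB. Qed.

Lemma sq_le_enorm u v : dotv u u <= dotv v v -> enorm u <= enorm v.
Proof. by move=> h; rewrite /enorm ler_sqrt // dotvv_ge0. Qed.

Lemma polar (a b c : V) :
  2 * dotv (a - b) (c - b) = dotv (a - b) (a - b) + dotv (c - b) (c - b) - dotv (a - c) (a - c).
Proof.
rewrite !(dotvBl, dotvBr) (dotvC b a) (dotvC c a) (dotvC c b); ring.
Qed.

End Dot.
Section Proj.
Variables (R : realType) (n : nat).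
Local Notation V := 'rV[R]_n.
Implicit Types u v w : V.

Lemma vec_id1 (z y p : V) (t : R) :
  z - (t *: y + (1 - t) *: p) = (z - p) - t *: (y - p).
Proof. by apply/rowP => i; rewrite !mxE; ring. Qed.

Lemma dotv_sub_scale (a b : V) (t : R) :
  dotv (a - t *: b) (a - t *: b) = dotv a a - 2 * t * dotv a b + t ^+ 2 * dotv b b.
Proof. rewrite !(dotvBl, dotvBr, dotvZl, dotvZr) (dotvC b a); ring. Qed.

Lemma enorm_le_sq u v : enorm u <= enorm v -> dotv u u <= dotv v v.
Proof.
move=> h; rewrite -!enorm_sq; have := enorm_ge0 u; have := enorm_ge0 v; nra.
Qed.

Lemma proj_vi (C : set V) z p : convex C -> is_proj C z p ->
  forall q, C q -> dotv (z - p) (q - p) <= 0.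
Proof.
move=> cvx [Cp pmin] q Cq.
set c := dotv (z - p) (q - p); set m := dotv (q - p) (q - p).
have m0 : 0 <= m by apply: dotvv_ge0.
have key : forall t, 0 < t <= 1 -> 2 * c <= t * m.
  move=> t /andP[t0 t1].
  have Cq' := cvx q p t Cq Cp (introT andP (conj (ltW t0) t1)).
  have := enorm_le_sq (pmin _ Cq'); rewrite vec_id1 dotv_sub_scale -/c -/m => h.
  have h2 : t * (2 * c) <= t * (t * m) by nra.
  by rewrite ler_pM2l in h2.
rewrite leNgt; apply/negP => c0.
have cm : 0 < c + m by lra.
have := key (c / (c + m)); rewrite divr_gt0 //= ler_pdivrMr // mul1r lerDl m0 => /(_ isT).
rewrite mulrAC ler_pdivlMr //; nra.
Qed.

Lemma nonexp_aux (a b : V) : dotv a (- b) <= 0 -> dotv b b <= dotv (a + b) (a + b).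
Proof.
rewrite dotvNr !(dotvDl, dotvDr) (dotvC b a); have := dotvv_ge0 a; lra.
Qed.

Lemma proj_nonexp (C : set V) z p q : convex C -> is_proj C z p -> C q ->
  dotv (p - q) (p - q) <= dotv (z - q) (z - q).
Proof.
move=> cvx hp Cq; have := proj_vi cvx hp Cq.
have -> : z - q = (z - p) + (p - q) by apply/rowP => i; rewrite !mxE; ring.
have -> : q - p = - (p - q) by rewrite opprB.
exact: nonexp_aux.
Qed.

Lemma coord_le_enorm u i : `|u ord0 i| <= enorm u.
Proof.
rewrite -[`|_|]sqrtr_sqr /enorm ler_sqrt ?dotvv_ge0 // /dotv.
rewrite (bigD1 i) //= -expr2 lerDl.
by apply: sumr_ge0 => j _; rewrite -expr2 sqr_ge0.
Qed.

Lemma mxnorm_le_enorm u : `|u| <= enorm u.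
Proof.
rewrite [`|_|]/Num.Def.normr /= mx_normrE; apply: bigmax_le => //; first exact: enorm_ge0.
by move=> [i j] _ /=; rewrite (ord1 i) coord_le_enorm.
Qed.

Lemma dotv_le_mxnorm u : dotv u u <= n%:R * `|u| ^+ 2.
Proof.
rewrite /dotv mulr_natl.
have -> : `|u| ^+ 2 *+ n = \sum_(i < n) `|u| ^+ 2 by rewrite sumr_const card_ord.
apply: ler_sum => i _.
rewrite -expr2 -real_normK ?num_real // lerXn2r ?nnegrE //.
have := mxnorm_le_enorm u.
rewrite [`|u|]/Num.Def.normr /= mx_normrE => _.
by apply/bigmax_geP; right; exists (ord0, i).
Qed.

Lemma f_cont (z : V) : continuous (fun u : V => dotv (z - u) (z - u)).
Proof.
rewrite /dotv; apply: (@continuous_big _ _ (fun a b : R => a + b) 0 xpredT).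
  exact: add_continuous.
move=> i _.
have ci : continuous (fun u : V => (z - u) ord0 i).
  have -> : (fun u : V => (z - u) ord0 i) = (fun u : V => z ord0 i - u ord0 i).
    by apply/funext => u; rewrite !mxE.
  move=> u; apply: continuousB; first exact: cst_continuous.
  exact: coord_continuous.
by move=> u; apply: continuousM; apply: ci.
Qed.

Lemma proj_exists (C : set V) z : C !=set0 -> closed C -> exists p, is_proj C z p.
Proof.
move=> [c0 Cc0] Ccl.
pose f := fun u : V => dotv (z - u) (z - u).
pose K := C `&` (f @^-1` [set r | r <= f c0]).
have Kcl : closed K.
  apply: closedI => //.
  by move/continuous_closedP : (@f_cont z); apply; apply: closed_le.
have Kb : bounded_set K.
  exists (`|z| + enorm (z - c0)); split; first by rewrite num_real.
  move=> M HM u [_ Ku] /=; apply/ltW/(le_lt_trans _ HM).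
  have -> : u = z - (z - u) by rewrite opprB addrC subrK.
  apply: (le_trans (ler_normB _ _)); rewrite lerD2l.
  apply: (le_trans (mxnorm_le_enorm _)).
  by apply: sq_le_enorm.
have Kc : compact K by apply: bounded_closed_compact.
have K0 : K !=set0 by exists c0; split => //=.
have [p pK pmin] := compact_EVT_min K0 Kc (continuous_subspaceT (@f_cont z)).
move: pK; rewrite inE => -[Cp fp].
exists p; split => // q Cq; apply: sq_le_enorm.
have [fq|fq] := leP (f q) (f c0).
  by apply: (pmin q); rewrite inE.
by apply: ltW; apply: le_lt_trans fq.
Qed.

Lemma orthproj_spec (C : set V) z : C !=set0 -> closed C -> is_proj C z (orthproj C z).
Proof.
move=> C0 Ccl; rewrite /orthproj; case: xgetP => //.
by move=> h; have [p hp] := proj_exists z C0 Ccl; have := h p.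
Qed.

End Proj.
Section Step.
Variables (R : realType) (n : nat).
Local Notation V := 'rV[R]_n.

Lemma beta_ineq (p q : V) (a b : R) : 0 < a -> 0 < b ->
  (1 / a + 1 / b)^-1 * dotv (p + q) (p + q) <= a * dotv p p + b * dotv q q.
Proof.
move=> a0 b0.
have h := dotvv_ge0 (a *: p - b *: q).
rewrite !(dotvBl, dotvBr, dotvZl, dotvZr) (dotvC q p) in h.
rewrite !(dotvDl, dotvDr) (dotvC q p).
have -> : (1 / a + 1 / b)^-1 = a * b / (a + b).
  by field; rewrite ?gt_eqF // addr_gt0.
rewrite mulrAC ler_pdivrMr ?addr_gt0 //.
lra.
Qed.

Lemma step_ineq (w x y xp wp gy gw fx fy hx hy : V) (lam eta mu L C : R) :
  0 < lam -> 0 < eta -> 0 < mu -> 0 < 1 - lam ^+ 2 * L ^+ 2 ->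
  dotv (w - lam *: gy - xp) (x - xp) <= 0 ->
  dotv (w - lam *: gw - y) (xp - y) <= 0 ->
  dotv (wp - y) (wp - y) <= dotv (w - y) (w - y) ->
  dotv (gw - gy) (gw - gy) <= L ^+ 2 * dotv (wp - y) (wp - y) ->
  gy = fy + eta *: hy ->
  0 <= dotv (fy - fx) (y - x) ->
  mu * dotv (y - x) (y - x) <= dotv (hy - hx) (y - x) ->
  dotv hx (x - y) <= C ->
  2 * lam * dotv fx (y - x) <=
    (1 - (1 / (1 - lam ^+ 2 * L ^+ 2) + 1 / (2 * lam * eta * mu))^-1) * dotv (w - x) (w - x)
    - dotv (xp - x) (xp - x) + 2 * lam * eta * C.
Proof.
move=> l0 e0 m0 a0 h1 h2 h3 h4 hg hmono hstr hC.
have b0 : 0 < 2 * lam * eta * mu by rewrite !mulr_gt0.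
have hb := beta_ineq (w - y) (y - x) a0 b0.
have ewx : w - y + (y - x) = w - x by apply/rowP => i; rewrite !mxE; ring.
rewrite ewx in hb.
have e1 : w - lam *: gy - xp = (w - xp) - lam *: gy by apply/rowP => i; rewrite !mxE; ring.
have e2 : w - lam *: gw - y = (w - y) - lam *: gw by apply/rowP => i; rewrite !mxE; ring.
rewrite e1 dotvBl dotvZl in h1; rewrite e2 dotvBl dotvZl in h2.
have P1 := polar w xp x; have P2 := polar w y xp.
have h3' : dotv gy (x - xp) + dotv gw (xp - y) = dotv gy (x - y) + dotv (gw - gy) (xp - y).
  have -> : x - xp = (x - y) - (xp - y) by apply/rowP => i; rewrite !mxE; ring.
  by rewrite dotvBr dotvBl; ring.
have Y := young1 (lam *: (gw - gy)) (xp - y).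
rewrite !(dotvZl, dotvZr) in Y.
have h4' : dotv gy (x - y) = - dotv fy (y - x) - eta * dotv hy (y - x).
  have -> : x - y = - (y - x) by rewrite opprB.
  by rewrite hg dotvNr dotvDl dotvZl; ring.
rewrite (dotvBl fy fx) in hmono; rewrite (dotvBl hy hx) in hstr.
have hC' : - C <= dotv hx (y - x).
  by rewrite -[y - x]opprB dotvNr lerN2.
have NX : dotv (x - xp) (x - xp) = dotv (xp - x) (xp - x).
  by rewrite -[x - xp]opprB dotvNr dotvNl opprK.
have lam2 : 0 <= lam ^+ 2 by rewrite sqr_ge0.
have m4 : lam ^+ 2 * dotv (gw - gy) (gw - gy) <= lam ^+ 2 * L ^+ 2 * dotv (w - y) (w - y).
  rewrite -mulrA; apply: ler_wpM2l => //; apply: (le_trans h4).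
  by apply: ler_wpM2l => //; rewrite sqr_ge0.
have m1 : 2 * lam * dotv fx (y - x) <= 2 * lam * dotv fy (y - x).
  by apply: ler_wpM2l; [rewrite mulr_ge0 // ltW | lra].
have le0 : 0 <= 2 * lam * eta by rewrite mulr_ge0 // ?mulr_ge0 // ltW.
have m2 : 2 * lam * eta * (dotv hx (y - x) + mu * dotv (y - x) (y - x))
          <= 2 * lam * eta * dotv hy (y - x).
  by apply: ler_wpM2l => //; lra.
have m3 : 2 * lam * eta * (- C) <= 2 * lam * eta * dotv hx (y - x).
  by apply: ler_wpM2l.
have m5 : 2 * lam * (dotv gy (x - xp) + dotv gw (xp - y)) =
          2 * lam * (- dotv fy (y - x) - eta * dotv hy (y - x)) + 2 * (lam * dotv (gw - gy) (xp - y)).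
  by rewrite h3' h4'; ring.
lra.
Qed.
End Step.
Section Tele.
Variable R : realType.

Definition qq (bet : nat -> R) j := (\prod_(i < j) (1 - bet i))^-1.

Lemma qq0 bet : qq bet 0 = 1.
Proof. by rewrite /qq big_ord0 invr1. Qed.

Lemma qq_gt0 bet j : (forall i, 0 < 1 - bet i) -> 0 < qq bet j.
Proof.
move=> h; rewrite /qq invr_gt0; elim: j => [|j IH]; first by rewrite big_ord0.
by rewrite big_ord_recr /= mulr_gt0.
Qed.

Lemma qqS bet j : (forall i, 0 < 1 - bet i) -> qq bet j.+1 * (1 - bet j) = qq bet j.
Proof.
move=> h; rewrite /qq big_ord_recr /= invfM -mulrA mulVf ?mulr1 //.
by rewrite gt_eqF.
Qed.

Lemma telesc (lam bet alp a d g : nat -> R) (D2 : R) m :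
  (forall j, 0 < 1 - bet j <= 1) ->
  (forall j, 0 <= alp j) -> alp 0%N <= 1 ->
  (forall j, alp j.+1 <= (1 - bet j) * alp j) ->
  (forall j, 0 <= a j <= D2) -> (forall j, 0 <= d j <= D2) ->
  (forall j, 2 * lam j * g j <= (1 - bet j) * ((1 + alp j) * a j - alp j * a j.-1
       + alp j * (1 + alp j) * d j) - a j.+1) ->
  \sum_(j < m) 2 * lam j * qq bet j.+1 * g j <= (2 * m%:R + 1) * D2.
Proof.
move=> hb ha0 ha1 hadec hA hd hstep.
have hb0 : forall i, 0 < 1 - bet i by move=> i; case/andP: (hb i).
have qpos := qq_gt0 _ hb0.
have qS := qqS _ hb0.
have alp1 : forall j, alp j <= 1.
  elim=> // j IH; apply: (le_trans (hadec j)).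
  have := hb j; have := ha0 j; nra.
have cdec : forall j, qq bet j.+1 * alp j.+1 <= qq bet j * alp j.
  move=> j; rewrite -(qS j) -mulrA; apply: ler_wpM2l; [exact: ltW | exact: hadec].
have cge0 : forall j, 0 <= qq bet j * alp j by move=> j; rewrite mulr_ge0 // ltW.
have cle1 : forall j, qq bet j * alp j <= 1.
  elim=> [|j IH]; first by rewrite qq0 mul1r.
  exact: le_trans (cdec j) IH.
have D20 : 0 <= D2 by case/andP: (hA 0%N) => h1 h2; exact: le_trans h2.
suff inv : forall m, \sum_(j < m) 2 * lam j * qq bet j.+1 * g j
     + qq bet m * a m - qq bet m * alp m * a m.-1
     <= (1 - qq bet m * alp m + 2 * m%:R) * D2.
  have := inv m.
  have := hA m; have := hA m.-1; have := qpos m; have := cge0 m; have := cle1 m.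
  set S := \sum_(j < m) _; set qm := qq bet m; set c := qm * alp m.
  move=> c1 c0 q0 /andP[am1 am1'] /andP[am am'] h.
  have f1 : c * a m.-1 <= c * D2 by apply: ler_wpM2l.
  have f2 : 0 <= qm * a m by rewrite mulr_ge0 // ltW.
  lra.
elim=> [|j IH].
  rewrite big_ord0 qq0 !mul1r /=; have := hA 0%N; have := ha1; have := ha0 0%N; nra.
rewrite big_ord_recr /=.
have hs := hstep j.
have hs' : qq bet j.+1 * (2 * lam j * g j) <=
   qq bet j * ((1 + alp j) * a j - alp j * a j.-1 + alp j * (1 + alp j) * d j)
   - qq bet j.+1 * a j.+1.
  apply: (le_trans (ler_wpM2l (ltW (qpos j.+1)) hs)).
  by rewrite mulrBr mulrA qS.
have f1 : (qq bet j * alp j - qq bet j.+1 * alp j.+1) * a j <=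
          (qq bet j * alp j - qq bet j.+1 * alp j.+1) * D2.
  apply: ler_wpM2l; first by rewrite subr_ge0.
  by case/andP: (hA j).
have f2 : qq bet j * alp j * (1 + alp j) * d j <= 2 * D2.
  have e1 : qq bet j * alp j * (1 + alp j) <= 2.
    have := cle1 j; have := cge0 j; have := alp1 j; have := ha0 j; nra.
  have e0 : 0 <= qq bet j * alp j * (1 + alp j).
    by apply: mulr_ge0 => //; have := ha0 j; lra.
  case/andP: (hd j) => d0 d1.
  apply: (le_trans (ler_wpM2l e0 d1)); exact: ler_wpM2r.
rewrite -addn1 natrD.
lra.
Qed.

End Tele.
Section Growth.
Variable R : realType.

Lemma growth (bet : nat -> R) (K A : R) (k : nat) :
  1 <= K -> 0 < A ->
  (forall i, 0 < 1 - bet i) -> (forall i, K^-1 <= bet i) ->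
  (Num.ceil (K * ln A) <= k%:Z)%R ->
  A <= qq bet k.
Proof.
move=> K1 A0 hb hK hc.
have K0 : 0 < K by apply: (lt_le_trans ltr01 K1).
have r0 : 0 <= 1 - K^-1 by rewrite subr_ge0 invf_le1.
have P1 : \prod_(i < k) (1 - bet i) <= (1 - K^-1) ^+ k.
  rewrite -[k in _ ^+ k]card_ord -prodr_const; apply: ler_prod => i _.
  by rewrite ltW //= lerD2l lerN2.
have P2 : (1 - K^-1) ^+ k <= expR (- (k%:R / K)).
  rewrite (_ : - (k%:R / K) = k%:R * (- K^-1)); last by rewrite mulrN.
  rewrite expRM_natl; apply: lerXn2r; rewrite ?nnegrE ?expR_ge0 //.
  by have := expR_ge1Dx (- K^-1).
have Pp : 0 < \prod_(i < k) (1 - bet i).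
  by apply: prodr_gt0 => i _.
have le1 : K * ln A <= k%:R.
  apply: (le_trans (ceil_ge _)); rewrite -(ler_int R) in hc; by rewrite -[k%:R]/(k%:Z%:~R).
have le2 : ln A <= k%:R / K by rewrite ler_pdivlMr // mulrC.
rewrite /qq.
apply: (@le_trans _ _ (expR (k%:R / K))).
  by rewrite -{1}(lnK A0) ler_expR.
rewrite -[expR (_ / _)]invrK -expRN lef_pV2 ?posrE ?expR_gt0 ?invr_gt0 //.
exact: le_trans P1 P2.
Qed.
End Growth.
Section Avg.
Variables (R : realType) (n : nat).
Local Notation V := 'rV[R]_n.

Lemma avg_expand (k : nat) (w : nat -> R) (yy : nat -> V) (u z : V) :
  \sum_(j < k) w j != 0 ->
  dotv u ((\sum_(j < k) w j)^-1 *: \sum_(j < k) w j *: yy j - z) =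
  (\sum_(j < k) w j)^-1 * \sum_(j < k) w j * dotv u (yy j - z).
Proof.
move=> h; rewrite dotvBr dotvZr dotv_sumr.
under [X in _ = _ * X]eq_bigr do rewrite dotvBr mulrBr.
rewrite sumrB -mulr_suml mulrBr mulrA mulVf // mul1r.
by congr (_ * _ - _); apply: eq_bigr => j _; rewrite dotvZr.
Qed.

Lemma winv_identity (a b c : V) (al : R) :
  dotv (a + al *: (a - b) - c) (a + al *: (a - b) - c) =
  (1 + al) * dotv (a - c) (a - c) - al * dotv (b - c) (b - c)
  + al * (1 + al) * dotv (a - b) (a - b).
Proof.
have e1 : a + al *: (a - b) - c = (a - c) + al *: (a - b).
  by apply/rowP => i; rewrite !mxE; ring.
have e2 : b - c = (a - c) - (a - b) by apply/rowP => i; rewrite !mxE; ring.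
rewrite e1 e2; move: (a - c) (a - b) => u v.
rewrite !(dotvBl, dotvBr, dotvDl, dotvDr, dotvNl, dotvNr, dotvZl, dotvZr) (dotvC v u); ring.
Qed.

End Avg.
Lemma sq_mono (R : realType) (a b : R) : 0 <= a -> a <= b -> a ^+ 2 <= b ^+ 2.
Proof. move=> a0 ab; nra. Qed.

Unset Implicit Arguments.

Theorem corollary4p19 (R : realType) (n : nat)
  (F H : 'rV[R]_n -> 'rV[R]_n) (DomF DomH X Omega : set 'rV[R]_n)
  (LF LH mu eps D0 lamlo lamhi : R) (alpha lam : nat -> R)
  (x y : nat -> 'rV[R]_n) (k : nat) :
  0 < LF -> 0 < LH ->
  monotone_op DomF F -> lipschitz_op DomF F LF ->
  monotone_op DomH H -> lipschitz_op DomH H LH ->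
  0 < mu -> strongly_monotone_op DomH H mu ->
  X !=set0 -> compact X -> convex X ->
  Omega !=set0 -> closed Omega -> convex Omega ->
  X `<=` Omega -> Omega `<=` DomF `&` DomH ->
  solset F X !=set0 ->
  0 < eps -> 0 < D0 -> lamhi * supnorm X H * diamset X / lamlo <= D0 ->
  let eta := eps / (2 * D0) in
  let L := LF + eta * LH in
  0 < lamlo -> lamlo <= lamhi -> lamhi < 1 / L ->
  (forall j, lamlo <= lam j <= lamhi) ->
  (forall j, 0 <= alpha j) -> alpha 0%N <= 1 ->
  (forall j, alpha j.+1 <= (1 - beta_k lam L eta mu j) * alpha j) ->
  X (x 0%N) ->
  (forall j, y j = orthproj X (ine_w x alpha j -
       lam j *: (F (orthproj Omega (ine_w x alpha j)) + eta *: H (orthproj Omega (ine_w x alpha j))))) ->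
  (forall j, x j.+1 = orthproj X (ine_w x alpha j - lam j *: (F (y j) + eta *: H (y j)))) ->
  (1 <= k)%N ->
  (Num.ceil ((1 / (1 - lamhi ^+ 2 * L ^+ 2) + D0 / (lamlo * mu * eps)) *
      ln (2 * k.+1%:R * diamset X ^+ 2 / (lamlo * eps))) <= k%:Z) ->
  0 <= Gap (ybar_k lam L eta mu y k) F X /\ Gap (ybar_k lam L eta mu y k) F X <= eps.
Proof.
move=> LF0 LH0 monoF lipF monoH lipH mu0 smonoH X0 Xc Xcvx O0 Ocl Ocvx XO ODom sol0
  eps0 D00 hD0 eta L lamlo0 lamlohi lamhiL hlam halp0 halp01 halpdec Xx0 hy hx k1 hceil.
have Xcl : closed X by apply: compact_closed.
have PX : forall z, is_proj X z (orthproj X z) by move=> z; apply: orthproj_spec.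
have PO : forall z, is_proj Omega z (orthproj Omega z) by move=> z; apply: orthproj_spec.
have PXin : forall z, X (orthproj X z) by move=> z; case: (PX z).
have POin : forall z, Omega (orthproj Omega z) by move=> z; case: (PO z).
have xX : forall j, X (x j) by elim=> // j _; rewrite hx; apply: PXin.
have yX : forall j, X (y j) by move=> j; rewrite hy; apply: PXin.
have DomFX : forall v, X v -> DomF v by move=> v /XO /ODom [].
have DomHX : forall v, X v -> DomH v by move=> v /XO /ODom [].
have DomFO : forall v, Omega v -> DomF v by move=> v /ODom [].
have DomHO : forall v, Omega v -> DomH v by move=> v /ODom [].
have eta0 : 0 < eta by rewrite /eta divr_gt0 // mulr_gt0.
have L0 : 0 < L by rewrite /L addr_gt0 // mulr_gt0.
have [M [_ hM]] := compact_bounded Xc.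
have Xb : forall v, X v -> `|v| <= M + 1.
  by move=> v Xv; apply: (hM (M + 1)) => //; rewrite ltrDl.
pose B := Num.sqrt (n%:R * (2 * (M + 1)) ^+ 2).
have hB : forall u v, X u -> X v -> enorm (u - v) <= B.
  move=> u v Xu Xv; rewrite /enorm ler_sqrt; last by rewrite mulr_ge0 // sqr_ge0.
  apply: (le_trans (dotv_le_mxnorm _)); apply: ler_wpM2l => //.
  apply: sq_mono => //.
  apply: (le_trans (ler_normB _ _)).
  by have := Xb u Xu; have := Xb v Xv; lra.
set DX := diamset X in hD0 hceil *.
have hDX : forall u v, X u -> X v -> enorm (u - v) <= DX.
  move=> u v Xu Xv; apply: ub_le_sup.
    by exists B => r [u' Xu' [v' Xv' <-]]; apply: hB.
  by exists u => //; exists v.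
have DX0 : 0 <= DX by apply: le_trans (hDX _ _ Xx0 Xx0); apply: enorm_ge0.
have hN : forall u v, X u -> X v -> dotv (u - v) (u - v) <= DX ^+ 2.
  by move=> u v Xu Xv; rewrite -enorm_sq; apply: sq_mono; [apply: enorm_ge0 | apply: hDX].
set CH := supnorm X H in hD0 *.
have hCH : forall u, X u -> enorm (H u) <= CH.
  move=> u Xu; apply: ub_le_sup; last by exists u.
  exists (enorm (H (x 0%N)) + LH * B) => r [v Xv <-].
  have e : H v = H (x 0%N) + (H v - H (x 0%N)) by rewrite addrC subrK.
  rewrite e; apply: (le_trans (enormD _ _)); rewrite lerD2l.
  apply: (le_trans (lipH _ _ (DomHX _ Xv) (DomHX _ (xX 0%N)))).
  by apply: ler_wpM2l; [apply: ltW | apply: hB].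
have CH0 : 0 <= CH by apply: le_trans (hCH _ Xx0); apply: enorm_ge0.
have etaC : eta * (CH * DX) <= eps / 2.
  have h1 : CH * DX <= D0.
    rewrite ler_pdivrMr // in hD0.
    have h2 := ler_wpM2r (mulr_ge0 CH0 DX0) lamlohi.
    have h3 : lamlo * (CH * DX) <= lamlo * D0 by rewrite mulrA; lra.
    by rewrite ler_pM2l in h3.
  apply: (le_trans (ler_wpM2l (ltW eta0) h1)).
  by rewrite /eta le_eqVlt; apply/orP; left; apply/eqP; field; rewrite gt_eqF.

have lamj0 : forall j, 0 < lam j by move=> j; case/andP: (hlam j) => h _; apply: lt_le_trans h.
have lhL : lamhi * L < 1 by rewrite ltr_pdivlMr in lamhiL.
have aj : forall j, 0 < 1 - lam j ^+ 2 * L ^+ 2 /\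
    1 - lamhi ^+ 2 * L ^+ 2 <= 1 - lam j ^+ 2 * L ^+ 2.
  move=> j; case/andP: (hlam j) => h1 h2.
  have e1 : 0 <= lam j * L by rewrite mulr_ge0 // ltW.
  have e2 : lam j * L <= lamhi * L by rewrite ler_wpM2r // ltW.
  have e3 : (lam j * L) ^+ 2 <= (lamhi * L) ^+ 2 by apply: sq_mono.
  rewrite !exprMn in e3.
  have e4 : (lamhi * L) ^+ 2 < 1.
    have e5 : 0 <= lamhi * L by apply: le_trans e2.
    by rewrite expr2; nra.
  rewrite !exprMn in e4.
  split; lra.
pose bet := fun j => beta_k lam L eta mu j.
have bj0 : forall j, 0 < 2 * lam j * eta * mu.
  move=> j; apply: mulr_gt0 => //; apply: mulr_gt0 => //; apply: mulr_gt0 => //; exact: lamj0.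
have bet_facts : forall j, 0 < 1 - bet j <= 1.
  move=> j; rewrite /bet /beta_k.
  have [a0 _] := aj j.
  have a1 : 1 - lam j ^+ 2 * L ^+ 2 <= 1 by rewrite lerBlDr lerDl mulr_ge0 // sqr_ge0.
  have i1 : 1 <= 1 / (1 - lam j ^+ 2 * L ^+ 2) by rewrite div1r invf_ge1.
  have i2 : 0 < 1 / (2 * lam j * eta * mu) by rewrite div1r invr_gt0.
  have s1 : 1 < 1 / (1 - lam j ^+ 2 * L ^+ 2) + 1 / (2 * lam j * eta * mu) by lra.
  have s0 : 0 < 1 / (1 - lam j ^+ 2 * L ^+ 2) + 1 / (2 * lam j * eta * mu) by lra.
  have t1 := s1; rewrite -invf_lt1 // in t1.
  have t0 : 0 < (1 / (1 - lam j ^+ 2 * L ^+ 2) + 1 / (2 * lam j * eta * mu))^-1.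
    by rewrite invr_gt0.
  apply/andP; split; lra.
have hb0 : forall i, 0 < 1 - bet i by move=> i; case/andP: (bet_facts i).
pose Kc := 1 / (1 - lamhi ^+ 2 * L ^+ 2) + D0 / (lamlo * mu * eps).
have ahi0 : 0 < 1 - lamhi ^+ 2 * L ^+ 2.
  have e5 : 0 <= lamhi * L by rewrite mulr_ge0 // ltW // (lt_le_trans lamlo0 lamlohi).
  have : (lamhi * L) ^+ 2 < 1 by rewrite expr2; nra.
  rewrite exprMn; lra.
have K1 : 1 <= Kc.
  have a1 : 1 - lamhi ^+ 2 * L ^+ 2 <= 1 by rewrite lerBlDr lerDl mulr_ge0 // sqr_ge0.
  have i1 : 1 <= 1 / (1 - lamhi ^+ 2 * L ^+ 2) by rewrite div1r invf_ge1.
  have i2 : 0 < D0 / (lamlo * mu * eps) by rewrite divr_gt0 // !mulr_gt0.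
  rewrite /Kc; lra.
have hKb : forall i, Kc^-1 <= bet i.
  move=> i; rewrite /bet /beta_k.
  have [a0 a1] := aj i.
  have s0 : 0 < 1 / (1 - lam i ^+ 2 * L ^+ 2) + 1 / (2 * lam i * eta * mu).
    by rewrite addr_gt0 // div1r invr_gt0.
  rewrite lef_pV2 ?posrE //; last by apply: lt_le_trans K1.
  have c1 : 1 / (1 - lam i ^+ 2 * L ^+ 2) <= 1 / (1 - lamhi ^+ 2 * L ^+ 2).
    by rewrite !div1r lef_pV2 ?posrE.
  have iD : 0 < (2 * D0)^-1 by rewrite invr_gt0 mulr_gt0.
  have c2 : 1 / (2 * lam i * eta * mu) <= D0 / (lamlo * mu * eps).
    have -> : D0 / (lamlo * mu * eps) = 1 / (2 * lamlo * eta * mu).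
      by rewrite /eta; field; rewrite ?gt_eqF //.
    rewrite !div1r lef_pV2 ?posrE ?bj0 ?mulr_gt0 //.
    case/andP: (hlam i) => h1 _.
    rewrite -!mulrA ler_pM2l // ler_pM2r ?mulr_gt0 ?invr_gt0 ?mulr_gt0 //.
  rewrite /Kc; lra.
have main : forall z, X z ->
    \sum_(j < k) 2 * lam j * qq bet j.+1 * (dotv (F z) (y j - z) - eta * (CH * DX))
      <= (2 * k%:R + 1) * DX ^+ 2.
  move=> z Xz.
  apply: (@telesc R lam bet alpha (fun j => dotv (x j - z) (x j - z))
           (fun j => dotv (x j - x j.-1) (x j - x j.-1))
           (fun j => dotv (F z) (y j - z) - eta * (CH * DX)) (DX ^+ 2) k) => //.
  - by move=> j /=; rewrite dotvv_ge0 hN.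
  - by move=> j /=; rewrite dotvv_ge0 hN.
  move=> j /=.
  pose w := ine_w x alpha j.
  pose wp := orthproj Omega w.
  have Owp : Omega wp by apply: POin.
  have h1 : dotv (w - lam j *: (F (y j) + eta *: H (y j)) - x j.+1) (z - x j.+1) <= 0.
    by rewrite hx; exact: (proj_vi Xcvx (PX (w - lam j *: (F (y j) + eta *: H (y j)))) Xz).
  have h2 : dotv (w - lam j *: (F wp + eta *: H wp) - y j) (x j.+1 - y j) <= 0.
    by rewrite hy; exact: (proj_vi Xcvx (PX (w - lam j *: (F wp + eta *: H wp))) (xX _)).
  have h3 : dotv (wp - y j) (wp - y j) <= dotv (w - y j) (w - y j).
    have Oy : Omega (y j) by apply: XO; apply: yX.
    by have := proj_nonexp Ocvx (PO w) Oy.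
  have h4 : dotv ((F wp + eta *: H wp) - (F (y j) + eta *: H (y j)))
                 ((F wp + eta *: H wp) - (F (y j) + eta *: H (y j)))
            <= L ^+ 2 * dotv (wp - y j) (wp - y j).
    have e : enorm ((F wp + eta *: H wp) - (F (y j) + eta *: H (y j)))
             <= L * enorm (wp - y j).
      have -> : (F wp + eta *: H wp) - (F (y j) + eta *: H (y j))
                = (F wp - F (y j)) + eta *: (H wp - H (y j)).
        by apply/rowP => i; rewrite !mxE; ring.
      apply: (le_trans (enormD _ _)); rewrite enormZ gtr0_norm //.
      have := lipF wp (y j) (DomFO _ Owp) (DomFX _ (yX j)).
      have := lipH wp (y j) (DomHO _ Owp) (DomHX _ (yX j)).
      rewrite /L; have := enorm_ge0 (wp - y j); nra.
    rewrite -!enorm_sq -exprMn; apply: sq_mono => //; apply: enorm_ge0.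
  have hm := monoF (y j) z (DomFX _ (yX j)) (DomFX _ Xz).
  have hs := smonoH (y j) z (DomHX _ (yX j)) (DomHX _ Xz).
  rewrite enorm_sq in hs.
  have hC : dotv (H z) (z - y j) <= CH * DX.
    apply: (le_trans (cauchy_schwarz _ _)).
    by apply: ler_pM; rewrite ?enorm_ge0 ?hCH ?hDX.
  have [a0 _] := aj j.
  have st := @step_ineq R n w z (y j) (x j.+1) wp _ _ (F z) (F (y j)) (H z) (H (y j))
     (lam j) eta mu L (CH * DX) (lamj0 j) eta0 mu0 a0 h1 h2 h3 h4 erefl hm hs hC.
  rewrite /w /ine_w winv_identity in st.
  rewrite /bet /beta_k.
  lra.

have qpos : forall j, 0 < qq bet j by move=> j; apply: qq_gt0.
have pkq : forall j, p_k lam L eta mu j = qq bet j.+1 by [].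
pose Sl := \sum_(j < k) lam j * qq bet j.+1.
have Slb : lamlo * qq bet k <= Sl.
  have [k' ek] : exists k', k = k'.+1 by exists k.-1; rewrite prednK.
  rewrite /Sl ek big_ord_recr /=.
  have s0 : 0 <= \sum_(i < k') lam i * qq bet i.+1.
    by apply: sumr_ge0 => i _; rewrite mulr_ge0 // ltW.
  have : lamlo * qq bet k'.+1 <= lam k' * qq bet k'.+1.
    by rewrite ler_wpM2r ?(ltW (qpos _)) //; case/andP: (hlam k').
  lra.
have Sl0 : 0 < Sl by apply: lt_le_trans Slb; rewrite mulr_gt0.
have hbig : (2 * k%:R + 1) * DX ^+ 2 <= eps * Sl.
  have [DXe|DXn] := eqVneq DX 0.
    by rewrite DXe expr0n /= mulr0 mulr_ge0 // ltW.
  have DXp : 0 < DX by rewrite lt_neqAle eq_sym DXn DX0.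
  pose A := 2 * k.+1%:R * DX ^+ 2 / (lamlo * eps).
  have A0 : 0 < A by rewrite /A divr_gt0 ?mulr_gt0 ?exprn_gt0.
  have hq := @growth R bet Kc A k K1 A0 hb0 hKb hceil.
  have e1 : eps * (lamlo * A) = 2 * k.+1%:R * DX ^+ 2.
    by rewrite /A; field; rewrite ?gt_eqF.
  have e2 : eps * (lamlo * A) <= eps * Sl.
    rewrite ler_pM2l //; apply: le_trans Slb; rewrite ler_pM2l //.
  have e3 : (2 * k%:R + 1) * DX ^+ 2 <= 2 * k.+1%:R * DX ^+ 2.
    rewrite ler_wpM2r ?sqr_ge0 // -addn1 natrD; lra.
  lra.
have eL : \sum_(j < k) lam j * eta * p_k lam L eta mu j = eta * Sl.
  by rewrite /Sl mulr_sumr; apply: eq_bigr => j _; rewrite pkq; ring.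
have Lne0 : \sum_(j < k) lam j * eta * p_k lam L eta mu j != 0.
  by rewrite eL mulf_neq0 // gt_eqF.
have eT : forall z, \sum_(j < k) lam j * eta * p_k lam L eta mu j * dotv (F z) (y j - z)
    = eta * \sum_(j < k) lam j * qq bet j.+1 * dotv (F z) (y j - z).
  by move=> z; rewrite mulr_sumr; apply: eq_bigr => j _; rewrite pkq; ring.
have elem : forall z, X z -> dotv (F z) (ybar_k lam L eta mu y k - z) <= eps.
  move=> z Xz; rewrite /ybar_k /Lambda_k.
  rewrite (@avg_expand R n k (fun j => lam j * eta * p_k lam L eta mu j) y (F z) z Lne0).
  rewrite eT eL invfM mulrACA mulVf ?gt_eqF // mul1r.
  set T := \sum_(j < k) _.
  have hm := main z Xz.
  have eS : \sum_(j < k) 2 * lam j * qq bet j.+1 * (dotv (F z) (y j - z) - eta * (CH * DX))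
     = 2 * T - 2 * (eta * (CH * DX)) * Sl.
    rewrite /T /Sl !mulr_sumr -sumrB; apply: eq_bigr => j _; ring.
  rewrite eS in hm.
  have := ler_wpM2r (ltW Sl0) etaC.
  move=> h; rewrite ler_pdivrMl //; lra.
have [xs [Xxs hxs]] := sol0.
have elem0 : 0 <= dotv (F xs) (ybar_k lam L eta mu y k - xs).
  rewrite /ybar_k /Lambda_k.
  rewrite (@avg_expand R n k (fun j => lam j * eta * p_k lam L eta mu j) y (F xs) xs Lne0).
  apply: mulr_ge0; first by rewrite invr_ge0 eL mulr_ge0 // ltW.
  apply: sumr_ge0 => j _; apply: mulr_ge0; last exact: hxs.
  by apply: ltW; rewrite /= pkq; apply: mulr_gt0; [apply: mulr_gt0 => // | apply: qpos].
rewrite /Gap; split.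
  apply: le_trans elem0 _; apply: ub_le_sup; last by exists xs.
  by exists eps => r [z Xz <-]; apply: elem.
apply: ge_sup; first by exists (dotv (F xs) (ybar_k lam L eta mu y k - xs)); exists xs.
by move=> r [z Xz <-]; apply: elem.
Qed.
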